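(* Let $\tau$ be a finite topology on $X$ and let $H=G_1(\tau)$. If distinct $u,v\in X$ are $T_i$-adjacent for some $i\in\{1,2,3',3'',4\}$, then $\mathrm{dist}_H(u,v)\le i$, where $3'$ and $3''$ are read as $3$.
   Context: A finite topology $\tau$ on a finite set $X$ is a family of subsets containing $\emptyset,X$ and closed under unions and intersections. For $A\subseteq X$, $m_\tau(A)$ is the intersection of all open sets containing $A$, $m_\tau(x)=m_\tau(\{x\})$; $\ell_\tau(x)=X\setminus\bigcup\{U\in\tau:x\notin U\}$ and $m_\tau(\ell(x))=m_\tau(\ell_\tau(x))$. Distinct $x,y$ are $T_1$-adjacent if $m_\tau(x)\subseteq m_\tau(y)$ or $m_\tau(y)\subseteq m_\tau(x)$; $T_2$-adjacent if $m_\tau(x)\cap m_\tau(y)\ne\emptyset$; $T_{3'}$-adjacent if $m_\tau(x)\cap m_\tau(\ell(y))\ne\emptyset$ and $m_\tau(\ell(x))\cap m_\tau(y)\ne\emptyset$; $T_{3''}$-adjacent if the same with ''or''; $T_4$-adjacent if $m_\tau(\ell(x))\cap m_\tau(\ell(y))\ne\emptyset$. $G_1(\tau)$ is the simple graph on $X$ in which distinct $x,y$ are adjacent iff they are $T_1$-adjacent. $\mathrm{dist}_H$ is graph distance in $H$. *)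

(* Defs.v *)
From mathcomp Require Import all_boot.
Set Implicit Arguments. Unset Strict Implicit. Unset Printing Implicit Defensive.

(* A finite topology on the finite set T (the whole type plays the role of X):
   contains the empty set and X, closed under (arbitrary, hence finite) unions
   and intersections. *)
Definition is_finite_topology (T : finType) (tau : {set {set T}}) : Prop :=
  [/\ set0 \in tau, [set: T] \in tau,
      (forall F : {set {set T}}, F \subset tau -> \bigcup_(U in F) U \in tau)
    & (forall F : {set {set T}}, F \subset tau -> \bigcap_(U in F) U \in tau)].

Definition mA (T : finType) (tau : {set {set T}}) (A : {set T}) : {set T} :=
  \bigcap_(U in tau | A \subset U) U.

Definition mx (T : finType) (tau : {set {set T}}) (x : T) : {set T} :=
  mA tau [set x].

Definition ell (T : finType) (tau : {set {set T}}) (x : T) : {set T} :=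
  ~: \bigcup_(U in tau | x \notin U) U.

Definition mell (T : finType) (tau : {set {set T}}) (x : T) : {set T} :=
  mA tau (ell tau x).

Definition T1_adj (T : finType) (tau : {set {set T}}) (x y : T) : bool :=
  (mx tau x \subset mx tau y) || (mx tau y \subset mx tau x).
Definition T2_adj (T : finType) (tau : {set {set T}}) (x y : T) : bool :=
  mx tau x :&: mx tau y != set0.
Definition T3'_adj (T : finType) (tau : {set {set T}}) (x y : T) : bool :=
  (mx tau x :&: mell tau y != set0) && (mell tau x :&: mx tau y != set0).
Definition T3''_adj (T : finType) (tau : {set {set T}}) (x y : T) : bool :=
  (mx tau x :&: mell tau y != set0) || (mell tau x :&: mx tau y != set0).
Definition T4_adj (T : finType) (tau : {set {set T}}) (x y : T) : bool :=
  mell tau x :&: mell tau y != set0.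

Inductive adj_index := I1 | I2 | I3' | I3'' | I4.

Definition index_val (i : adj_index) : nat :=
  match i with I1 => 1 | I2 => 2 | I3' => 3 | I3'' => 3 | I4 => 4 end.

Definition Ti_adj (i : adj_index) (T : finType) (tau : {set {set T}}) (x y : T)
  : bool :=
  match i with
  | I1 => T1_adj tau x y
  | I2 => T2_adj tau x y
  | I3' => T3'_adj tau x y
  | I3'' => T3''_adj tau x y
  | I4 => T4_adj tau x y
  end.

Definition G1 (T : finType) (tau : {set {set T}}) : rel T :=
  fun x y => (x != y) && T1_adj tau x y.

Definition dist_le (T : finType) (e : rel T) (u v : T) (k : nat) : Prop :=
  exists p : seq T, [/\ size p <= k, path e u p & last u p = v].

(* Main.v *)
Require Import Defs.
From mathcomp Require Import all_boot.
Set Implicit Arguments.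

Section Aux.
Variables (T : finType) (tau : {set {set T}}).
Hypothesis Htop : is_finite_topology tau.

Lemma mx_open x : mx tau x \in tau.
Proof.
case: Htop => _ _ _ Hcap.
have := Hcap [set U in tau | [set x] \subset U].
rewrite /mx /mA.
have -> : \bigcap_(U in [set U in tau | [set x] \subset U]) U =
          \bigcap_(U in tau | [set x] \subset U) U.
  by apply: eq_bigl => U; rewrite in_set.
apply; apply/subsetP => U; rewrite in_set => /andP[] //.
Qed.

Lemma mx_self x : x \in mx tau x.
Proof. by apply/bigcapP => U /andP[_]; rewrite sub1set. Qed.

Lemma mx_min U x : U \in tau -> x \in U -> mx tau x \subset U.
Proof.
move=> HU xU; apply/subsetP => z /bigcapP; apply; rewrite HU /= sub1set //.
Qed.

Lemma mx_in z y : z \in mx tau y -> mx tau z \subset mx tau y.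
Proof. by move=> H; apply: mx_min => //; apply: mx_open. Qed.

Lemma mA_sub A z : z \in mA tau A -> exists2 y, y \in A & z \in mx tau y.
Proof.
case: Htop => _ _ Hcup _.
set F := [set mx tau y | y in A].
have FO : \bigcup_(U in F) U \in tau.
  apply: Hcup; apply/subsetP => U /imsetP [y _ ->]; exact: mx_open.
move/bigcapP => H.
have : z \in \bigcup_(U in F) U.
  apply: H; rewrite FO /=; apply/subsetP => y yA.
  apply/bigcupP; exists (mx tau y); first by apply/imsetP; exists y.
  exact: mx_self.
by move/bigcupP => [U /imsetP [y yA ->] zU]; exists y.
Qed.

Lemma ell_in v y : y \in ell tau v -> v \in mx tau y.
Proof.
rewrite /ell inE => /bigcupP H; apply/negPn/negP => Hv; apply: H.
exists (mx tau y); first by rewrite mx_open Hv.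
exact: mx_self.
Qed.

Lemma mell_sub v z : z \in mell tau v ->
  exists y, [/\ z \in mx tau y & v \in mx tau y].
Proof.
by move/mA_sub => [y /ell_in H1 H2]; exists y.
Qed.

Definition stepR x y := (x == y) || T1_adj tau x y.

Lemma dist_step x y : stepR x y -> dist_le (G1 tau) x y 1.
Proof.
case/orP => [/eqP -> | H]; first by exists [::].
case: (eqVneq x y) => [-> | ne]; first by exists [::].
by exists [:: y]; rewrite /= /G1 ne H.
Qed.

Lemma dist_trans u w v a b : dist_le (G1 tau) u w a -> dist_le (G1 tau) w v b ->
  dist_le (G1 tau) u v (a + b).
Proof.
move=> [p [sp pp lp]] [q [sq pq lq]]; exists (p ++ q); split.
- by rewrite size_cat leq_add.
- by rewrite cat_path pp lp pq.
- by rewrite last_cat lp.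
Qed.

Lemma sub_step z y : z \in mx tau y -> stepR z y /\ stepR y z.
Proof.
move/mx_in => H; rewrite /stepR /T1_adj H.
by split; rewrite ?orbT.
Qed.

End Aux.

Theorem lemma4p2 (T : finType) (tau : {set {set T}}) (u v : T)
  (i : adj_index) :
  is_finite_topology tau -> u != v -> Ti_adj i tau u v ->
  dist_le (G1 tau) u v (index_val i).
Proof.
move=> Ht uv.
have S1 : forall x y, x \in mx tau y -> dist_le (G1 tau) x y 1.
  by move=> x y /(sub_step Ht) [H _]; apply: dist_step.
have S2 : forall x y, x \in mx tau y -> dist_le (G1 tau) y x 1.
  by move=> x y /(sub_step Ht) [_ H]; apply: dist_step.
have C3 : (mx tau u :&: mell tau v != set0) -> dist_le (G1 tau) u v 3.
  case/set0Pn => z; rewrite inE => /andP [zu /(mell_sub Ht) [y [zy vy]]].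
  apply: (@dist_trans _ _ _ y _ 2 1); last exact: S2.
  apply: (@dist_trans _ _ _ z _ 1 1); [exact: S2| exact: S1].
have C3' : (mell tau u :&: mx tau v != set0) -> dist_le (G1 tau) u v 3.
  case/set0Pn => z; rewrite inE => /andP [/(mell_sub Ht) [y [zy uy]] zv].
  apply: (@dist_trans _ _ _ z _ 2 1); last exact: S1.
  apply: (@dist_trans _ _ _ y _ 1 1); [exact: S1| exact: S2].
case: i => /=.
- move=> H; apply: dist_step; rewrite /stepR H orbT //.
- case/set0Pn => z; rewrite inE => /andP [zu zv].
  apply: (@dist_trans _ _ _ z _ 1 1); [exact: S2| exact: S1].
- by case/andP => H _; apply: C3.
- by case/orP => H; [apply: C3 | apply: C3'].
- case/set0Pn => z; rewrite inE => /andP [/(mell_sub Ht) [y1 [zy1 uy1]]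
                                       /(mell_sub Ht) [y2 [zy2 vy2]]].
  apply: (@dist_trans _ _ _ z _ 2 2).
  + apply: (@dist_trans _ _ _ y1 _ 1 1); [exact: S1| exact: S2].
  + apply: (@dist_trans _ _ _ y2 _ 1 1); [exact: S1| exact: S2].
Qed.
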